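(* Let $0\le\alpha\le1$ and let $a\in C(\mathbf{R})$ satisfy $\frac{a_1}{(1+|x|)^{\alpha}}\le a(x)\le \frac{a_2}{(1+|x|)^{\alpha}}$ for all $x\in\mathbf{R}$, with constants $a_1,a_2>0$, where in the case $\alpha=1$ it is assumed that $a_1>2$. Let $V\in C^1(\mathbf{R})$ be bounded with $V(x)>0$ and $xV'(x)\le0$ for all $x$. For positive constants $\varepsilon_1,\varepsilon_2,\varepsilon_3$ set $f(t)=\varepsilon_1(1+t)^2$, $g(t)=\varepsilon_2(1+t)$, $h(t,x)=\varepsilon_3(1+t)x\phi(x)$, where $\phi(x)=1$ for $|x|\le1$ and $\phi(x)=1/|x|$ for $|x|\ge1$, and let $$F_3(t,x)=g_{tt}(t)-g_t(t)a(x)-V(x)f_t(t)+2V(x)g(t)-V_x(x)h(t,x)-V(x)h_x(t,x).$$ Then there exist positive constants $\varepsilon_1,\varepsilon_2,\varepsilon_3$, $C$ and $t_0$ such that for all $t>t_0$ and all $x\in\mathbf{R}$ with $|x|\ne1$, $-F_3(t,x)\le C\,a(x)$. *)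

(* Defs.v *)
From Stdlib Require Import Reals.
From Coquelicot Require Import Coquelicot.
Open Scope R_scope.

Definition phi (x : R) : R := if Rle_dec (Rabs x) 1 then 1 else / Rabs x.

Definition fF (e1 t : R) : R := e1 * (1 + t) ^ 2.
Definition gF (e2 t : R) : R := e2 * (1 + t).
Definition hF (e3 t x : R) : R := e3 * (1 + t) * x * phi x.

Definition F3 (a V : R -> R) (e1 e2 e3 t x : R) : R :=
  Derive (Derive (gF e2)) t
  - Derive (gF e2) t * a x
  - V x * Derive (fF e1) t
  + 2 * V x * gF e2 t
  - Derive V x * hF e3 t x
  - V x * Derive (fun y => hF e3 t y) x.

(* Main.v *)
Require Import Defs.
From Stdlib Require Import Reals Lra.
From Coquelicot Require Import Coquelicot.
Open Scope R_scope.

Lemma loc_near (x r : R) (P : R -> Prop) : 0 < r ->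
  (forall y, Rabs (y - x) < r -> P y) -> locally x P.
Proof.
  intros Hr H. exists (mkposreal r Hr). intros y Hy. apply H.
  exact Hy.
Qed.

Lemma hx_val (e3 t x : R) : Rabs x <> 1 ->
  Derive (fun y => hF e3 t y) x = if Rle_dec (Rabs x) 1 then e3 * (1 + t) else 0.
Proof.
  intros Hx. apply is_derive_unique.
  destruct (Rle_dec (Rabs x) 1) as [Hle|Hgt].
  - assert (Hlt : Rabs x < 1) by lra.
    apply is_derive_ext_loc with (f := fun y => e3 * (1 + t) * y).
    + apply loc_near with (r := 1 - Rabs x); [lra|].
      intros y Hy. unfold hF, phi; lazymatch goal with |- ?u = ?v => change (@eq R u v) end.
      destruct (Rle_dec (Rabs y) 1) as [_|n].
      * rewrite Rmult_1_r; reflexivity.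
      * exfalso. apply n. pose proof (Rabs_triang_inv y x). lra.
    + auto_derive; auto; try ring.
  - destruct (Rle_lt_dec 0 x) as [Hp|Hn].
    + rewrite Rabs_pos_eq in Hgt, Hx by lra.
      apply is_derive_ext_loc with (f := fun y => e3 * (1 + t)).
      * apply loc_near with (r := x - 1); [lra|].
        intros y Hy. unfold hF, phi; lazymatch goal with |- ?u = ?v => change (@eq R u v) end.
        assert (Hy1 : 1 < y).
        { apply Rabs_def2 in Hy. lra. }
        rewrite Rabs_pos_eq by lra.
        destruct (Rle_dec y 1) as [n|_]; [lra|]. field. lra.
      * auto_derive; auto.
    + rewrite Rabs_left in Hgt, Hx by lra.
      apply is_derive_ext_loc with (f := fun y => - (e3 * (1 + t))).
      * apply loc_near with (r := - x - 1); [lra|].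
        intros y Hy. unfold hF, phi; lazymatch goal with |- ?u = ?v => change (@eq R u v) end.
        assert (Hy1 : y < -1).
        { apply Rabs_def2 in Hy. lra. }
        rewrite Rabs_left by lra.
        destruct (Rle_dec (- y) 1) as [n|_]; [lra|]. field. lra.
      * auto_derive; auto; try ring.
Qed.

Theorem lemma2p3 (alpha a1 a2 : R) (a V : R -> R) :
  0 <= alpha <= 1 ->
  0 < a1 -> 0 < a2 ->
  (alpha = 1 -> 2 < a1) ->
  (forall x, continuous a x) ->
  (forall x, a1 / Rpower (1 + Rabs x) alpha <= a x
             /\ a x <= a2 / Rpower (1 + Rabs x) alpha) ->
  (forall x, ex_derive V x) ->
  (forall x, continuous (Derive V) x) ->
  (exists M, forall x, Rabs (V x) <= M) ->
  (forall x, 0 < V x) ->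
  (forall x, x * Derive V x <= 0) ->
  exists e1 e2 e3 C t0 : R,
    0 < e1 /\ 0 < e2 /\ 0 < e3 /\ 0 < C /\ 0 < t0 /\
    forall t x, t0 < t -> Rabs x <> 1 ->
      - F3 a V e1 e2 e3 t x <= C * a x.
Proof.
  intros _ _ _ _ _ _ _ _ _ HV HxV.
  exists 1, 2, 1, 2, 1. do 5 (split; [lra|]).
  intros t x Ht Hx.
  assert (Hg : forall s, Derive (gF 2) s = 2).
  { intros s. apply is_derive_unique. unfold gF. auto_derive; auto; try ring. }
  assert (Hgg : Derive (Derive (gF 2)) t = 0).
  { rewrite (Derive_ext _ (fun _ => 2)) by exact Hg.
    apply is_derive_unique. auto_derive; auto. }
  assert (Hf : Derive (fF 1) t = 2 * (1 + t)).
  { apply is_derive_unique. unfold fF. auto_derive; auto; try ring. }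
  unfold F3. rewrite Hgg, Hg, Hf, hx_val by exact Hx.
  assert (Hphi : 0 < phi x).
  { unfold phi. destruct (Rle_dec (Rabs x) 1); [lra|].
    apply Rinv_0_lt_compat; lra. }
  assert (Hh : Derive V x * hF 1 t x <= 0).
  { unfold hF.
    replace (Derive V x * (1 * (1 + t) * x * phi x))
      with ((x * Derive V x) * ((1 + t) * phi x)) by ring.
    apply Rmult_le_0_r; [apply HxV|].
    apply Rmult_le_pos; lra. }
  pose proof (HV x) as Vx. unfold gF.
  destruct (Rle_dec (Rabs x) 1); nra.
Qed.
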